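(* Let $G=(g_1,\dots,g_k)\in\mathbb{N}_0^k$ be telescopic with $g_1>0$ and $c(G)=(c_2,\dots,c_k)$, and let $h_j=c_jg_j$ for $2\le j\le k$. Then $G$ is minimal if and only if $g_i\ne h_j$ for all $i\in\{1,\dots,k\}$ and all $j\in\{2,\dots,k\}$.
   Context: For $G=(g_1,\dots,g_k)\in\mathbb{N}_0^k$, $\langle G\rangle$ is the set of $\mathbb{N}_0$-linear combinations of its entries; $G$ is minimal if $\langle G''\rangle\ne\langle G\rangle$ for every proper subsequence $G''$. Let $G_i=(g_1,\dots,g_i)$, $d_i=\gcd(G_i)$, $c_j=d_{j-1}/d_j$ for $2\le j\le k$ (well defined since $g_1>0$). $G$ is telescopic if $c_jg_j\in\langle G_{j-1}\rangle$ for all $2\le j\le k$. *)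

(* Defs.v *)
(* Sequences G = (g_1,...,g_k) are `seq nat`; paper indices
   are 1-based, so g_i = nth 0 G i.-1. *)
From mathcomp Require Import all_boot.
Set Implicit Arguments. Unset Strict Implicit. Unset Printing Implicit Defensive.

Definition gent (G : seq nat) (i : nat) : nat := nth 0 G i.-1.

Definition inGen (G : seq nat) (n : nat) : Prop :=
  exists a : seq nat, size a = size G /\
    n = \sum_(i < size G) nth 0 a i * nth 0 G i.

Definition minimal (G : seq nat) : Prop :=
  forall G2 : seq nat, subseq G2 G -> G2 != G ->
    ~ (forall n, inGen G2 n <-> inGen G n).

Definition prefix_seq (G : seq nat) (i : nat) : seq nat := take i G.

Definition dgcd (G : seq nat) (i : nat) : nat := foldr gcdn 0 (take i G).

Definition cval (G : seq nat) (j : nat) : nat := dgcd G j.-1 %/ dgcd G j.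

Definition telescopic (G : seq nat) : Prop :=
  forall j, 2 <= j <= size G -> inGen (prefix_seq G j.-1) (cval G j * gent G j).

(* Main.v *)
Require Import Defs.
From mathcomp Require Import all_boot.
Set Implicit Arguments. Unset Strict Implicit. Unset Printing Implicit Defensive.

Inductive sg (s : seq nat) : nat -> Prop :=
| sg0 : sg s 0
| sgS a x : a \in s -> sg s x -> sg s (a + x).

Lemma sg_gen s a : a \in s -> sg s a.
Proof. by move=> H; rewrite -[a]addn0; apply: sgS => //; apply: sg0. Qed.

Lemma sg_add s x y : sg s x -> sg s y -> sg s (x + y).
Proof.
elim=> [|a x' Ha _ IH] Hy; first by rewrite add0n.
by rewrite -addnA; apply: sgS => //; exact: IH.
Qed.

Lemma sg_mul s b x : sg s x -> sg s (b * x).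
Proof.
move=> Hx; elim: b => [|b IH]; first by rewrite mul0n; apply: sg0.
by rewrite mulSn; apply: sg_add.
Qed.

Lemma sg_sub s t x : (forall z, z \in s -> sg t z) -> sg s x -> sg t x.
Proof.
move=> H; elim=> [|a x' Ha _ IH]; first exact: sg0.
by apply: sg_add => //; apply: H.
Qed.

Lemma sg_mono s t x : {subset s <= t} -> sg s x -> sg t x.
Proof. by move=> H; apply: sg_sub => z Hz; apply: sg_gen; apply: H. Qed.

Lemma sg_nil x : sg [::] x -> x = 0.
Proof. by case=> // a y; rewrite in_nil. Qed.

Lemma sg_cons g s x : sg (g :: s) x <-> exists b y, x = b * g + y /\ sg s y.
Proof.
split.
- elim=> [|a x' Ha _ [b [y [-> Hy]]]]; first by exists 0, 0; split => //; apply: sg0.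
  rewrite in_cons in Ha; case/orP: Ha => [/eqP -> | Ha].
  + by exists b.+1, y; split => //; rewrite mulSn addnA.
  + exists b, (a + y); split; first by rewrite addnCA.
    by apply: sgS.
- move=> [b [y [-> Hy]]]; apply: sg_add.
  + by apply: sg_mul; apply: sg_gen; rewrite mem_head.
  + by apply: sg_mono Hy => z Hz; rewrite in_cons Hz orbT.
Qed.

Lemma inGen_cons g s x :
  inGen (g :: s) x <-> exists b y, x = b * g + y /\ inGen s y.
Proof.
split.
- move=> [a [Ha ->]]; case: a Ha => [|a0 a] //= [Ha].
  exists a0, (\sum_(i < size s) nth 0 a i * nth 0 s i); split.
  + by rewrite big_ord_recl /=.
  + by exists a.
- move=> [b [y [-> [a [Ha ->]]]]]; exists (b :: a); split; first by rewrite /= Ha.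
  by rewrite /= big_ord_recl /=.
Qed.

Lemma inGen_sg s x : inGen s x <-> sg s x.
Proof.
elim: s x => [|g s IH] x.
- split.
  + by move=> [a [_ ->]]; rewrite big_ord0; apply: sg0.
  + by move/sg_nil ->; exists [::]; rewrite big_ord0.
- split => [/inGen_cons [b [y [-> /IH Hy]]]|/sg_cons [b [y [-> /IH Hy]]]].
  + by apply/sg_cons; exists b, y.
  + by apply/inGen_cons; exists b, y.
Qed.

Lemma foldr_dvd s a : a \in s -> foldr gcdn 0 s %| a.
Proof.
elim: s => //= b s IH; rewrite in_cons => /orP [/eqP -> | H].
- exact: dvdn_gcdl.
- exact: dvdn_trans (dvdn_gcdr _ _) (IH H).
Qed.

Lemma dvd_foldr d s : (forall a, a \in s -> d %| a) -> d %| foldr gcdn 0 s.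
Proof.
elim: s => [|b s IH] H /=; first exact: dvdn0.
rewrite dvdn_gcd H ?mem_head //= IH // => a Ha; apply: H.
by rewrite in_cons Ha orbT.
Qed.

Lemma sg_dvd d s x : (forall a, a \in s -> d %| a) -> sg s x -> d %| x.
Proof.
move=> H; elim=> [|a x' Ha _ IH]; first exact: dvdn0.
by rewrite dvdn_add // H.
Qed.

Lemma foldr_rcons_gcd s a : foldr gcdn 0 (rcons s a) = gcdn (foldr gcdn 0 s) a.
Proof.
elim: s => [|b s IH] /=; first by rewrite gcdn0 gcd0n.
by rewrite IH gcdnA.
Qed.

Lemma dgcdS G p : p < size G -> dgcd G p.+1 = gcdn (dgcd G p) (nth 0 G p).
Proof. by move=> Hp; rewrite /dgcd (take_nth 0 Hp) foldr_rcons_gcd. Qed.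

Lemma dgcd_gt0 G p : 0 < nth 0 G 0 -> 0 < p -> 0 < dgcd G p.
Proof.
case: G => [|g s] //= Hg; case: p => [|p] //= _.
by rewrite gcdn_gt0 Hg.
Qed.

Lemma dgcd_elem G q a : a \in take q G -> dgcd G q %| a.
Proof. exact: foldr_dvd. Qed.

Lemma dgcd_mono G p q : p <= q -> dgcd G q %| dgcd G p.
Proof.
move=> Hpq; apply: dvd_foldr => a Ha; apply: dgcd_elem.
by move: Ha; rewrite -(take_takel G Hpq) => /mem_take.
Qed.

Lemma sg_dgcd G q x : sg (take q G) x -> dgcd G q %| x.
Proof. by apply: sg_dvd => a Ha; apply: dgcd_elem. Qed.

Lemma cdiv G p b : p < size G -> 0 < dgcd G p.+1 ->
  dgcd G p %| b * nth 0 G p -> (dgcd G p %/ dgcd G p.+1) %| b.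
Proof.
move=> Hp; rewrite dgcdS //.
set d := dgcd G p; set g := nth 0 G p; set e := gcdn d g => He.
have Hd : d = (d %/ e) * e by rewrite divnK // dvdn_gcdl.
have Hg : g = (g %/ e) * e by rewrite divnK // dvdn_gcdr.
have Hco : gcdn (d %/ e) (g %/ e) = 1.
  apply/eqP; rewrite -(eqn_pmul2r He) mul1n muln_gcdl -Hd -Hg.
  done.
rewrite {1}Hd {1}Hg mulnA dvdn_pmul2r // => H.
have H2 : d %/ e %| b * (d %/ e) by apply: dvdn_mull.
have : d %/ e %| gcdn (b * (g %/ e)) (b * (d %/ e)) by rewrite dvdn_gcd H H2.
by rewrite -muln_gcdr gcdnC Hco muln1.
Qed.

Definition hypH G := forall i j, 1 <= i <= size G -> 2 <= j <= size G ->
  gent G i <> cval G j * gent G j.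

Lemma sg_filt_lt s a x : sg s x -> x < a -> sg (filter (fun y => y != a) s) x.
Proof.
elim=> [|z x' Hz _ IH] Hlt; first exact: sg0.
apply: sgS.
- rewrite mem_filter Hz andbT; apply/eqP => Hza; rewrite Hza in Hlt.
  by rewrite ltnNge leq_addr in Hlt.
- by apply: IH; exact: leq_ltn_trans (leq_addl _ _) Hlt.
Qed.

Lemma noc1 G p : hypH G -> 0 < nth 0 G 0 -> p < size G ->
  sg (take p G) (nth 0 G p) -> False.
Proof.
move=> H Hg1 Hp; case: p Hp => [|p] Hp.
  by rewrite take0 => /sg_nil Hz; rewrite Hz in Hg1.
move=> Hs; have Hdv := sg_dgcd Hs.
have Hpos : 0 < dgcd G p.+1 by apply: dgcd_gt0.
have Hc : cval G p.+2 = 1.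
  have -> : cval G p.+2 = dgcd G p.+1 %/ dgcd G p.+2 by [].
  by rewrite (@dgcdS G p.+1) // (gcdn_idPl Hdv) divnn Hpos.
apply: (H p.+2 p.+2); [by rewrite /= Hp | by rewrite /= Hp |].
by rewrite Hc mul1n.
Qed.

Lemma uniqG G : hypH G -> 0 < nth 0 G 0 -> uniq G.
Proof.
move=> H Hg1.
suff: forall n, n <= size G -> uniq (take n G) by move/(_ _ (leqnn _)); rewrite take_size.
elim=> [|n IH] Hn; first by rewrite take0.
rewrite (take_nth 0 Hn) rcons_uniq IH ?(ltnW Hn) // andbT.
by apply/negP => Hin; apply: (noc1 H Hg1 Hn); apply: sg_gen.
Qed.

Lemma Elem G i0 t : telescopic G -> 0 < nth 0 G 0 -> hypH G -> i0 + t < size G ->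
  forall x, sg (filter (fun y => y != nth 0 G i0) (take (i0 + t).+1 G)) x ->
  x <= nth 0 G i0 -> dgcd G i0.+1 %| x -> sg (take i0 G) x.
Proof.
move=> Htel Hg1 H; elim: t => [|t IH] Hlt x Hx Hxa Hdx.
- move: Hx; rewrite addn0 in Hlt *; rewrite (take_nth 0 Hlt) filter_rcons eqxx /=.
  by apply: sg_mono => y; rewrite mem_filter => /andP [].
- rewrite addnS in Hlt Hx.
  set m := (i0 + t).+1 in Hlt Hx.
  have Hm : m < size G by [].
  set a := nth 0 G i0 in Hx Hxa Hdx *.
  have Hx2 : sg (nth 0 G m :: filter (fun y => y != a) (take m G)) x.
    apply: sg_mono Hx => y; rewrite (take_nth 0 Hm) filter_rcons.
    case: ifP => _; first by rewrite mem_rcons.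
    by move=> Hy'; rewrite in_cons Hy' orbT.
  have [b [y [Exy Hy]]] := (iffLR (sg_cons _ _ _) Hx2).
  have Him : i0.+1 <= m by rewrite /m ltnS leq_addr.
  have Hdm : dgcd G m %| x := dvdn_trans (dgcd_mono G Him) Hdx.
  have Hdy : dgcd G m %| y.
    apply: sg_dvd Hy => z; rewrite mem_filter => /andP [_ Hz]; exact: dgcd_elem.
  have Hdb : dgcd G m %| b * nth 0 G m by rewrite -(dvdn_addl _ Hdy) -Exy.
  have Hpos : 0 < dgcd G m.+1 by apply: dgcd_gt0.
  have /dvdnP [q Eb] := cdiv Hm Hpos Hdb.
  have Ht : sg (take m G) (cval G m.+1 * nth 0 G m).
    apply/inGen_sg; apply: (Htel m.+1); by apply/andP.
  apply: IH => //; first exact: ltnW.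
  rewrite Exy Eb -mulnA.
  case: q Eb => [|q] Eb; first by rewrite mul0n add0n.
  apply: sg_add => //; apply: sg_mul; apply: sg_filt_lt => //.
  rewrite ltn_neqAle; apply/andP; split.
  + apply/eqP => E; apply: (H i0.+1 m.+1).
    * by rewrite /= (ltn_trans Him Hm).
    * by apply/andP.
    * exact: esym E.
  + apply: leq_trans Hxa; rewrite Exy Eb -mulnA; apply: leq_trans (leq_addr _ _).
    by rewrite mulSn leq_addr.
Qed.

Lemma Efull G p : telescopic G -> 0 < nth 0 G 0 -> hypH G -> p < size G ->
  sg (filter (fun y => y != nth 0 G p) G) (nth 0 G p) -> False.
Proof.
move=> Htel Hg1 H Hp Hs.
have Heq : (p + (size G - p.+1)).+1 = size G by rewrite -addSn subnKC.
have Hlt : p + (size G - p.+1) < size G by rewrite -ltnS Heq.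
apply: (noc1 H Hg1 Hp); apply: (Elem Htel Hg1 H Hlt).
- by rewrite Heq take_size.
- exact: leqnn.
- by apply: dgcd_elem; rewrite (take_nth 0 Hp) mem_rcons mem_head.
Qed.

Lemma take_filter_uniq G p x : uniq G -> p < size G -> sg (take p G) x ->
  sg (filter (fun y => y != nth 0 G p) G) x.
Proof.
move=> Hu Hp; apply: sg_mono => y Hy.
rewrite mem_filter (mem_take Hy) andbT; apply/eqP => E.
have := index_ltn Hy; rewrite E index_uniq //.
by rewrite ltnn.
Qed.

Theorem mainTheorem5 (G : seq nat) :
  0 < size G -> 0 < gent G 1 -> telescopic G ->
  (minimal G <->
   (forall i j, 1 <= i <= size G -> 2 <= j <= size G ->
      gent G i <> cval G j * gent G j)).
Proof.
move=> Hsz Hg1 Htel; split.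
- move=> Hmin i j Hi Hj Heqij.
  case Hu: (uniq G); last first.
    apply: (Hmin (undup G)); first exact: undup_subseq.
    + by apply/negP => /eqP E; rewrite -E undup_uniq in Hu.
    + move=> n; split => /inGen_sg Hn; apply/inGen_sg; move: Hn;
        by apply: sg_mono => y; rewrite mem_undup.
  suff [p [Hp Hs]] : exists p, p < size G /\
      sg (filter (fun y => y != nth 0 G p) G) (nth 0 G p).
    apply: (Hmin (filter (fun y => y != nth 0 G p) G)); first exact: filter_subseq.
    + apply/eqP => E.
      have : nth 0 G p \in filter (fun y => y != nth 0 G p) G by rewrite E mem_nth.
      by rewrite mem_filter eqxx.
    + move=> n; split => /inGen_sg Hn; apply/inGen_sg; move: Hn.
      * by apply: sg_mono => y; rewrite mem_filter => /andP [].
      * apply: sg_sub => y Hy.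
        case: (eqVneq y (nth 0 G p)) => [-> // | Hne].
        by apply: sg_gen; rewrite mem_filter Hne Hy.
  rewrite /gent in Heqij.
  case/andP: Hi => Hi1 Hi2; case/andP: Hj => Hj1 Hj2.
  have Hii : i.-1 < size G by rewrite prednK.
  have Hjj : j.-1 < size G by rewrite prednK // ltnW.
  case: (eqVneq (nth 0 G i.-1) 0) => [Ha | Ha].
    by exists i.-1; split => //; rewrite Ha; apply: sg0.
  case: (eqVneq (nth 0 G j.-1) 0) => [Hz | Hz].
    by exists j.-1; split => //; rewrite Hz; apply: sg0.
  case: (eqVneq (cval G j) 1) => [Hc | Hc].
    exists j.-1; split => //; apply: take_filter_uniq => //.
    have := Htel j; rewrite Hj1 Hj2 => /(_ isT) /inGen_sg.
    by rewrite Hc mul1n.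
  exists i.-1; split => //; rewrite Heqij.
  have Hc0 : cval G j != 0 by apply: contraNneq Ha => E; rewrite Heqij E.
  have Hc2 : 1 < cval G j.
    by case: (cval G j) Hc Hc0 => [|[|c]].
  apply: sg_mul; apply: sg_gen; rewrite mem_filter mem_nth // andbT.
  have Hz0 : 0 < nth 0 G j.-1 by rewrite lt0n.
  apply/eqP => E; have := ltn_Pmull Hc2 (Hz0 : 0 < nth 0 G j.-1).
  by rewrite -E ltnn.
- move=> H G2 Hsub Hne Heq.
  have Hg1' : 0 < nth 0 G 0 by [].
  have Hu := uniqG H Hg1'.
  have Hlt : size G2 < size G.
    case: (size_subseq_leqif Hsub) => Hle Hiff.
    by rewrite ltn_neqAle Hle andbT Hiff.
  have : ~~ all (fun x => x \in G2) G.
    apply/negP => /allP Hall.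
    by have := uniq_leq_size Hu Hall; rewrite leqNgt Hlt.
  case/allPn => a HaG HaG2.
  have Hp : index a G < size G by rewrite index_mem.
  have Hap : nth 0 G (index a G) = a by rewrite nth_index.
  apply: (Efull Htel Hg1' H Hp); rewrite Hap.
  have : sg G2 a.
    by apply/inGen_sg; apply/Heq; apply/inGen_sg; apply: sg_gen.
  apply: sg_mono => y Hy; rewrite mem_filter (mem_subseq Hsub Hy) andbT.
  by apply/eqP => E; move: HaG2 => /=; rewrite -E Hy.
Qed.
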